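(* Let $m,k\in\mathbb{N}$ and let $\alpha\in\mathbb{C}$ with $\alpha,\ 1+\alpha+2m+k,\ 1+\alpha+2m\notin\mathbb{Z}_0^-$. Then \[ {}_3F_2\left[\begin{array}{r} -2m,\ \alpha,\ 1+\alpha+2m+k;\\ -2m-k,\ 1+\alpha+2m;\end{array}1\right]_{2m}=\frac{(1+\alpha)_{2m}\left(1+\frac{\alpha}{2}+k\right)_{2m}}{\left(1+\frac{\alpha}{2}\right)_{2m}(1+k)_{2m}}. \]
   Context: $\mathbb{N}=\{1,2,3,\dots\}$, $\mathbb{Z}_0^-=\{0,-1,-2,\dots\}$. For $a\in\mathbb{C}$ and $n\in\mathbb{N}_0$, $(a)_0=1$ and $(a)_n=a(a+1)\cdots(a+n-1)$. For $N\in\mathbb{N}_0$, ${}_3F_2\left[\begin{array}{r} a_1,a_2,a_3;\\ b_1,b_2;\end{array}z\right]_N=\sum_{n=0}^{N}\frac{(a_1)_n(a_2)_n(a_3)_n}{(b_1)_n(b_2)_n}\frac{z^n}{n!}$ (the sum of the first $N+1$ terms), defined whenever $(b_1)_n(b_2)_n\neq0$ for $0\le n\le N$. *)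

(* Defs.v *)
From HB Require Import structures.
From mathcomp Require Import all_boot all_order all_algebra.
From mathcomp Require Import complex.
From mathcomp Require Import reals.
Set Implicit Arguments. Unset Strict Implicit. Unset Printing Implicit Defensive.
Import Order.TTheory GRing.Theory Num.Theory.
Local Open Scope ring_scope.

Definition poch {F : pzRingType} (a : F) (n : nat) : F :=
  \prod_(i < n) (a + i%:R).

Definition not_nonpos_int {F : pzRingType} (a : F) : Prop :=
  forall n : nat, a <> - n%:R.

Definition F32_trunc {F : fieldType} (a1 a2 a3 b1 b2 z : F) (N : nat) : F :=
  \sum_(n < N.+1)
    (poch a1 n * poch a2 n * poch a3 n) / (poch b1 n * poch b2 n)
      * z ^+ n / (n`!)%:R.

(* Main.v *)
Require Import Defs.
From HB Require Import structures.
From mathcomp Require Import all_boot all_order all_algebra.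
From mathcomp Require Import complex.
From mathcomp Require Import reals.
From mathcomp Require Import ring.
Import Order.TTheory GRing.Theory Num.Theory.
Local Open Scope ring_scope.

Section P.
Variable F : numFieldType.
Implicit Types (x y a : F).

Lemma pochE x y n : x = y -> poch x n = poch y n.
Proof. by move->. Qed.

Lemma poch0 x : poch x 0 = 1.
Proof. by rewrite /poch big_ord0. Qed.

Lemma poch_Sr x n : poch x n.+1 = poch x n * (x + n%:R).
Proof. by rewrite /poch big_ord_recr. Qed.

Lemma poch_Sl x n : poch x n.+1 = x * poch (x + 1) n.
Proof.
rewrite /poch big_ord_recl addr0; congr (_ * _).
apply: eq_bigr => i _; rewrite /bump /= -natr1; ring.
Qed.

Lemma poch_add x n k : poch x (n + k) = poch x n * poch (x + n%:R) k.
Proof.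
elim: k => [|k IH]; first by rewrite addn0 poch0 mulr1.
rewrite addnS !poch_Sr IH natrD; ring.
Qed.

Lemma poch_refl y k : poch (- (y + k%:R)) k = (-1) ^+ k * poch (y + 1) k.
Proof.
elim: k => [|k IH]; first by rewrite !poch0 expr0 mulr1.
rewrite poch_Sl (pochE _ (-(y+k%:R))); last by rewrite -natr1; ring.
rewrite IH poch_Sr exprS -natr1; ring.
Qed.

Lemma poch_neq0 x n : (forall i, (i < n)%N -> x + i%:R != 0) -> poch x n != 0.
Proof. move=> H; apply/prodf_neq0 => i _; exact: H. Qed.

Lemma nnpi_add a n : not_nonpos_int a -> a + n%:R != 0.
Proof. move=> h; apply/eqP => e; apply: (h n); by rewrite -[a](addrK n%:R) e sub0r. Qed.

Lemma nnpi_shift a n : not_nonpos_int a -> not_nonpos_int (a + n%:R).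
Proof. move=> h j e; apply: (h (j + n)%N); rewrite -[a](addrK n%:R) e natrD; ring. Qed.

Lemma natr_neq0 n : (n.+1)%:R != 0 :> F.
Proof. by rewrite pnatr_eq0. Qed.

Lemma fact_neq0 n : (n`!)%:R != 0 :> F.
Proof. by rewrite pnatr_eq0 -lt0n fact_gt0. Qed.


Definition U a (N k : nat) : F := \sum_(n < N.+1)
  poch a n / (n`!)%:R * (poch (N%:R - n%:R + 1) k * poch (1 + a + N%:R + n%:R) k).

Lemma U_rec a N k : U a N k.+1 =
  (N.+1)%:R * (a + N.+1%:R) * U a N.+1 k - a * (a + 1) * U (a + 1 + 1) N k.
Proof.
have step1 : U a N k.+1 = \sum_(n < N.+2) poch a n / (n`!)%:R *
   (((N.+1)%:R - n%:R) * (a + N.+1%:R + n%:R) *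
    (poch (N.+1%:R - n%:R + 1) k * poch (1 + a + N.+1%:R + n%:R) k)).
  rewrite big_ord_recr /= subrr !mul0r mulr0 addr0.
  apply: eq_bigr => i _; congr (_ * _).
  rewrite !poch_Sl (pochE (N%:R - i%:R + 1 + 1) (N.+1%:R - i%:R + 1)); last by rewrite -natr1; ring.
  rewrite (pochE (1 + a + N%:R + i%:R + 1) (1 + a + N.+1%:R + i%:R)); last by rewrite -natr1; ring.
  rewrite -natr1; ring.
rewrite step1.
have -> : \sum_(n < N.+2) poch a n / (n`!)%:R *
   (((N.+1)%:R - n%:R) * (a + N.+1%:R + n%:R) *
    (poch (N.+1%:R - n%:R + 1) k * poch (1 + a + N.+1%:R + n%:R) k)) =
   \sum_(n < N.+2) ((N.+1)%:R * (a + N.+1%:R) * (poch a n / (n`!)%:R *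
    (poch (N.+1%:R - n%:R + 1) k * poch (1 + a + N.+1%:R + n%:R) k)) -
    poch a n / (n`!)%:R * (n%:R * (a + n%:R)) *
    (poch (N.+1%:R - n%:R + 1) k * poch (1 + a + N.+1%:R + n%:R) k)).
  by apply: eq_bigr => i _; ring.
rewrite sumrB -mulr_sumr; congr (_ - _).
rewrite big_ord_recl /= mul0r mulr0 !mul0r add0r mulr_sumr.
apply: eq_bigr => i _.
rewrite /bump /= add1n.
have hi := natr_neq0 i.
rewrite factS natrM.
rewrite (pochE (N.+1%:R - i.+1%:R + 1) (N%:R - i%:R + 1)); last by rewrite -!natr1; ring.
rewrite (pochE (1 + (a + 1 + 1) + N%:R + i%:R) (1 + a + N.+1%:R + i.+1%:R)); last by rewrite -!natr1; ring.
have E : poch a i.+1 * (a + i.+1%:R) = a * (a + 1) * poch (a + 1 + 1) i.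
  by rewrite -poch_Sr !poch_Sl; ring.
have hf := fact_neq0 i.
set Q := (poch _ k * poch _ k).
transitivity (a * (a + 1) * poch (a + 1 + 1) i / i`!%:R * Q); last by field.
rewrite -E; field; by rewrite hf nat1r hi.
Qed.


Lemma U_base a N : U a N 0 = poch (1 + a) N / (N`!)%:R.
Proof.
rewrite /U; under eq_bigr do rewrite !poch0 !mulr1.
elim: N => [|N IH]; first by rewrite big_ord1 !poch0 fact0 mul1r.
rewrite big_ord_recr /= IH (poch_Sr (1 + a)) (poch_Sl a) (pochE (a + 1) (1 + a)) ?(addrC a 1) // factS natrM.
have h1 := fact_neq0 N; have h2 := natr_neq0 N.
rewrite -natr1 in h2 *; field.
by rewrite h1 h2.
Qed.

Lemma half_neq0 a j : not_nonpos_int a -> 1 + a / 2%:R + j%:R != 0.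
Proof.
move=> h; apply/eqP => e; apply: (h (2 * j + 2)%N).
have h2 : (2%:R : F) != 0 by rewrite pnatr_eq0.
have -> : a = 2%:R * (1 + a / 2%:R + j%:R) - (2 * j + 2)%:R.
  rewrite natrD natrM; by field.
by rewrite e mulr0 sub0r.
Qed.


Lemma U_closed k : forall a N, not_nonpos_int a ->
  U a N k = k`!%:R * poch (1 + a) N * poch (1 + a + N%:R) k
            * poch (1 + a / 2%:R + N%:R) k / (poch (1 + a / 2%:R) k * N`!%:R).
Proof.
elim: k => [|k IH] a N ha.
  by rewrite U_base !poch0 fact0 mul1r !mulr1 mul1r.
have ha2 : not_nonpos_int (a + 1 + 1).
  by rewrite -addrA -[1 + 1]/(2%:R); exact: nnpi_shift.
rewrite U_rec (IH a N.+1 ha) (IH _ N ha2).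
set P := poch (1 + a) N.
set Q := poch (1 + a + N.+1%:R) k.
set Rr := poch (1 + a / 2%:R + N.+1%:R) k.
set S := poch (1 + a / 2%:R) k.
have hS : S != 0 by apply: poch_neq0 => i _; exact: half_neq0.
have hNf := fact_neq0 N.
have hN1 := natr_neq0 N.
have hk1 := natr_neq0 k.
have hh0 : 1 + a / 2%:R != 0 by have := half_neq0 a 0 ha; rewrite addr0.
have hhk : 1 + a / 2%:R + k%:R != 0 by exact: half_neq0.
have ha1 : 1 + a != 0 by rewrite addrC; have := nnpi_add a 1 ha.
have ha2' : 1 + a + 1 != 0 by rewrite addrC addrA; have := nnpi_add a 2 ha; rewrite -[1 + 1]/(2%:R) addrC.
have haN : 1 + a + N.+1%:R != 0 by have := nnpi_add a N.+2 ha; rewrite -!natr1; apply: contra => /eqP e; apply/eqP; rewrite -e; ring.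
have e1 : poch (1 + a) N.+1 = P * (1 + a + N%:R) by rewrite poch_Sr.
have e2 : poch (1 + a + N%:R) k.+1 = (1 + a + N%:R) * Q.
  by rewrite poch_Sl (pochE (1 + a + N%:R + 1) (1 + a + N.+1%:R)) // -natr1; ring.
have e3 : poch (1 + (a + 1 + 1) + N%:R) k = Q * (1 + a + N.+1%:R + k%:R) / (1 + a + N.+1%:R).
  have := poch_Sr (1 + a + N.+1%:R) k; rewrite poch_Sl.
  rewrite (pochE (1 + a + N.+1%:R + 1) (1 + (a + 1 + 1) + N%:R)); last by rewrite -natr1; ring.
  move=> E; apply: (mulfI haN); rewrite -/Q -E; field; by rewrite nat1r.
have e4 : poch (1 + a / 2%:R + N%:R) k.+1 = (1 + a / 2%:R + N%:R) * Rr.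
  by rewrite poch_Sl (pochE (1 + a / 2%:R + N%:R + 1) (1 + a / 2%:R + N.+1%:R)) // -natr1; ring.
have e5 : poch (1 + (a + 1 + 1) / 2%:R + N%:R) k = Rr.
  by rewrite /Rr (pochE (1 + (a + 1 + 1) / 2%:R + N%:R) (1 + a / 2%:R + N.+1%:R)) // -natr1; field.
have e6 : poch (1 + a / 2%:R) k.+1 = S * (1 + a / 2%:R + k%:R) by rewrite poch_Sr.
have e7 : poch (1 + (a + 1 + 1) / 2%:R) k = S * (1 + a / 2%:R + k%:R) / (1 + a / 2%:R).
  have := poch_Sr (1 + a / 2%:R) k; rewrite poch_Sl.
  rewrite (pochE (1 + a / 2%:R + 1) (1 + (a + 1 + 1) / 2%:R)); last by field.
  move=> E; apply: (mulfI hh0); rewrite -/S -E; field; by rewrite addrC; exact: (nnpi_add a 2 ha).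
have e8 : poch (1 + (a + 1 + 1)) N = P * (1 + a + N%:R) * (1 + a + N.+1%:R) / ((1 + a) * (1 + a + 1)).
  have E1 : poch (1 + a) N.+2 = P * (1 + a + N%:R) * (1 + a + N.+1%:R) by rewrite !poch_Sr.
  have E2 : poch (1 + a) N.+2 = (1 + a) * ((1 + a + 1) * poch (1 + (a + 1 + 1)) N).
    by rewrite !poch_Sl (pochE (1 + a + 1 + 1) (1 + (a + 1 + 1))) //; ring.
  apply: (mulfI (mulf_neq0 ha1 ha2')); rewrite -mulrA -E2 E1; field.
  by rewrite ha1 ha2'.
have h2a : 2 + a != 0 by rewrite addrC; exact: (nnpi_add a 2 ha).
have h2ak : 2 + a + k%:R * 2 != 0.
  apply: contra hhk => /eqP e; apply/eqP.
  have -> : 1 + a / 2%:R + k%:R = (2 + a + k%:R * 2) / 2 by field.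
  by rewrite e mul0r.
rewrite e1 e2 e3 e4 e5 e6 e7 e8 !factS !natrM.
rewrite -!natr1 in hN1 hk1 haN *.
field.
by rewrite hNf h2ak hS h2a haN ha1 hN1.
Qed.


Lemma poch1 n : poch (1 : F) n = (n`!)%:R.
Proof.
elim: n => [|n IH]; first by rewrite poch0 fact0.
by rewrite poch_Sr IH factS natrM nat1r mulrC.
Qed.

Lemma natpos_neq0 N i : (N + 1)%:R + i%:R != 0 :> F.
Proof. by rewrite -natrD pnatr_eq0 addn1. Qed.

Lemma main_gen a N k : (0 < k)%N -> not_nonpos_int a ->
  F32_trunc (- N%:R) a (1 + a + N%:R + k%:R) (- N%:R - k%:R) (1 + a + N%:R) 1 N
  = (poch (1 + a) N * poch (1 + a / 2%:R + k%:R) N)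
    / (poch (1 + a / 2%:R) N * poch (1 + k%:R) N).
Proof.
move=> hk ha.
have haN : not_nonpos_int (1 + a + N%:R).
  have -> : 1 + a + N%:R = a + (N + 1)%:R by rewrite natrD; ring.
  exact: nnpi_shift.
pose Z1 := poch (N%:R + 1 : F) k.
set Z2 := poch (1 + a + N%:R) k.
have hZ1 : Z1 != 0 by apply: poch_neq0 => i _; have := natpos_neq0 N i; rewrite natrD.
have hZ2 : Z2 != 0 by apply: poch_neq0 => i _; exact: nnpi_add.
rewrite /F32_trunc.
have -> : \sum_(n < N.+1)
    poch (- N%:R) n * poch a n * poch (1 + a + N%:R + k%:R) n /
    (poch (- N%:R - k%:R) n * poch (1 + a + N%:R) n) * 1 ^+ n / n`!%:R
  = \sum_(n < N.+1) (poch a n / (n`!)%:R *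
      (poch (N%:R - n%:R + 1) k * poch (1 + a + N%:R + n%:R) k)) / (Z1 * Z2).
  apply: eq_bigr => i _.
  have hi : (i <= N)%N by rewrite -ltnS ltn_ord.
  set n := nat_of_ord i.
  have hD : poch (- N%:R - k%:R : F) n != 0.
    apply: poch_neq0 => j hj.
    have -> : - N%:R - k%:R + j%:R = - ((N + k - j)%:R) :> F.
      rewrite natrB; last by rewrite (leq_trans (ltnW hj)) // (leq_trans hi) // leq_addr.
      rewrite natrD; ring.
    rewrite oppr_eq0 pnatr_eq0 subn_eq0 -ltnNge.
    exact: leq_trans (leq_trans hj hi) (leq_addr k N).
  have hE : poch (1 + a + N%:R) n != 0 by apply: poch_neq0 => j _; exact: nnpi_add.
  have hf := fact_neq0 n.
  have I1 : poch (- N%:R : F) n = poch (- N%:R - k%:R) n * poch (N%:R - n%:R + 1) k / Z1.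
    have A1 := poch_add (- N%:R - k%:R) n k.
    have A2 := poch_add (- N%:R - k%:R) k n.
    rewrite addnC A2 in A1.
    rewrite (pochE (- N%:R - k%:R + k%:R) (- N%:R)) in A1; last by ring.
    rewrite (pochE (- N%:R - k%:R + n%:R) (- ((N%:R - n%:R) + k%:R))) in A1; last by ring.
    rewrite (pochE (- N%:R - k%:R) (- (N%:R + k%:R))) in A1; last by ring.
    rewrite !poch_refl in A1.
    have hs : (-1) ^+ k != 0 :> F by rewrite expf_neq0 // oppr_eq0 oner_eq0.
    apply: (mulIf hZ1); rewrite mulfVK //.
    apply: (mulfI hs).
    transitivity ((-1 : F) ^+ k * poch (N%:R + 1) k * poch (- N%:R) n); first by rewrite /Z1; ring.
    by rewrite A1; ring.
  have I2 : poch (1 + a + N%:R + k%:R) n = poch (1 + a + N%:R) n * poch (1 + a + N%:R + n%:R) k / Z2.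
    have A1 := poch_add (1 + a + N%:R) n k.
    have A2 := poch_add (1 + a + N%:R) k n.
    rewrite addnC A2 in A1.
    apply: (mulIf hZ2); rewrite mulfVK // -A1 /Z2; ring.
  rewrite I1 I2 expr1n; field.
  by rewrite hZ2 hZ1 hf hE hD.
rewrite -mulr_suml.
change (U a N k / (Z1 * Z2) = poch (1 + a) N * poch (1 + a / 2%:R + k%:R) N /
  (poch (1 + a / 2%:R) N * poch (1 + k%:R) N)).
rewrite U_closed //.
set Rh := poch (1 + a / 2%:R + N%:R) k.
set Sh := poch (1 + a / 2%:R) k.
have hSh : Sh != 0 by apply: poch_neq0 => i _; exact: half_neq0.
have hT : poch (1 + a / 2%:R) N != 0 by apply: poch_neq0 => i _; exact: half_neq0.
have hNf := fact_neq0 N.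
have hkf := fact_neq0 k.
have J1 : poch (1 + a / 2%:R + k%:R) N = poch (1 + a / 2%:R) N * Rh / Sh.
  apply: (mulfI hSh); rewrite [RHS]mulrC divfK // /Sh /Rh -!poch_add.
  by rewrite addnC.
have J2 : poch (1 + k%:R) N = N`!%:R * Z1 / k`!%:R.
  apply: (mulfI hkf); rewrite [RHS]mulrC divfK // /Z1 -(poch1 k) -(poch1 N).
  rewrite (pochE (N%:R + 1) (1 + N%:R)); last by rewrite addrC.
  rewrite -!poch_add.
  by rewrite addnC.
rewrite J1 J2 -/Z2; clearbody Z1 Z2 Rh Sh; field.
by rewrite hkf hZ1 hNf hT hSh hZ2.
Qed.

End P.

Local Open Scope complex_scope.

Theorem mainTheorem14 (R : realType) (m k : nat) (alpha : R[i])
  (hm : (0 < m)%N) (hk : (0 < k)%N)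
  (h1 : not_nonpos_int alpha)
  (h2 : not_nonpos_int (1 + alpha + (2 * m)%:R + k%:R))
  (h3 : not_nonpos_int (1 + alpha + (2 * m)%:R)) :
  F32_trunc (- (2 * m)%:R) alpha (1 + alpha + (2 * m)%:R + k%:R)
            (- (2 * m)%:R - k%:R) (1 + alpha + (2 * m)%:R) 1 (2 * m)
  = (poch (1 + alpha) (2 * m) * poch (1 + alpha / 2%:R + k%:R) (2 * m))
    / (poch (1 + alpha / 2%:R) (2 * m) * poch (1 + k%:R) (2 * m)).
Proof. exact: main_gen. Qed.
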